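(* For all $n\ge0$, \[ c_n^2=\delta_{n,0}+c_{n-1}^2+c_{n-3}^2+2\sum_{l=3}^n p_{l-1}c_{n-l}^2 . \]
   Context: The Narayana's cows numbers $c_n$ are defined by $c_n=\delta_{n,0}+c_{n-1}+c_{n-3}$ for $n\ge0$, $c_n=0$ for $n<0$. The Padovan numbers $p_n$ are defined by $p_n=\delta_{n,0}+p_{n-2}+p_{n-3}$ for $n\ge0$, $p_n=0$ for $n<0$. $\delta_{i,j}$ is $1$ if $i=j$ and $0$ otherwise. Empty sums are $0$. *)

(* Defs.v *)
From mathcomp Require Import all_boot all_algebra.
Set Implicit Arguments. Unset Strict Implicit. Unset Printing Implicit Defensive.

(* Narayana's cows numbers on nat: c_0 = 1, c_n = c_{n-1} + c_{n-3} (c_k = 0 for k < 0). *)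
Fixpoint cowN (n : nat) : nat :=
  match n with
  | 0 => 1
  | 1 => 1
  | 2 => 1
  | ((m.+1 as k).+1 as j).+1 => cowN j + cowN m
  end.

(* Padovan numbers on nat: p_0 = 1, p_n = p_{n-2} + p_{n-3} (p_k = 0 for k < 0). *)
Fixpoint padN (n : nat) : nat :=
  match n with
  | 0 => 1
  | 1 => 0
  | 2 => 1
  | ((m.+1 as k).+1 as j).+1 => padN k + padN m
  end.

Definition cow (z : int) : nat := if z is Posz n then cowN n else 0.
Definition pad (z : int) : nat := if z is Posz n then padN n else 0.

(* Main.v *)
Require Import Defs.
From mathcomp Require Import all_boot all_algebra.
From mathcomp Require Import zify.

Definition V (m : nat) : nat := \sum_(k < m.+1) padN k * cowN (m - k) ^ 2.
Definition W (m : nat) : nat := \sum_(k < m.+1) padN k.+2 * cowN (m - k) ^ 2.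

Lemma cowS m : cowN m.+3 = cowN m.+2 + cowN m. Proof. by []. Qed.
Lemma padS m : padN m.+3 = padN m.+1 + padN m. Proof. by []. Qed.

Lemma V2 m : V m.+2 = cowN m.+2 ^ 2 + W m.
Proof.
rewrite /V /W big_ord_recl big_ord_recl /=.
by rewrite mul1n mul0n add0n.
Qed.

Lemma W1 m : W m.+1 = V m.+1 + V m.
Proof.
rewrite /W /V big_ord_recl [X in _ = X + _]big_ord_recl -addnA; congr (_ + _).
rewrite -big_split; apply: eq_bigr => i _.
rewrite !lift0 subSS padS mulnDl //.
Qed.

Lemma Wclosed m : W m = cowN m.+2 * cowN m.
Proof.
have H : forall m, [/\ W m = cowN m.+2 * cowN m,
                      W m.+1 = cowN m.+3 * cowN m.+1 &
                      W m.+2 = cowN m.+4 * cowN m.+2].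
  elim=> [|k [IH0 IH1 IH2]].
    by split; rewrite /W !big_ord_recl big_ord0.
  split=> //.
  rewrite W1 !V2 IH1 IH0 !cowS; nia.
by case: (H m).
Qed.

Local Open Scope ring_scope.

Theorem mainTheorem12 (n : nat) :
  ((cow n%:Z) ^ 2 =
   (n == 0)%N + (cow (n%:Z - 1)) ^ 2 + (cow (n%:Z - 3)) ^ 2
   + 2 * \sum_(3 <= l < n.+1) pad (l%:Z - 1) * (cow (n%:Z - l%:Z)) ^ 2)%N.
Proof.
case: n => [|[|[|m]]]; try by rewrite big_geq.
have -> : (\sum_(3 <= l < m.+4) pad (l%:Z - 1) * (cow (m.+3%:Z - l%:Z)) ^ 2 = W m)%N.
  rewrite -{1}(add0n 3%N) big_addn big_mkord /W.
  have -> : (m.+4 - 3 = m.+1)%N by lia.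
  apply: eq_bigr => i _.
  have Hi : (i <= m)%N by rewrite -ltnS.
  have e1 : (i + 3)%N%:Z - 1 = (i.+2)%N%:Z :> int by lia.
  have e2 : m.+3%:Z - (i + 3)%N%:Z = (m - i)%N%:Z :> int by lia.
  by rewrite e1 e2.
rewrite Wclosed.
have -> : m.+3%:Z - 1 = m.+2%:Z :> int by lia.
have -> : m.+3%:Z - 3 = m%:Z :> int by lia.
rewrite /cow cowS /=; lia.
Qed.
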